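(* Let $\alpha_1,\alpha_2,\alpha_3,\alpha_4\in\mathcal{O}^\times$. Then $$\min\{v(\alpha_1+\alpha_2-\alpha_3-\alpha_4),\,v(\alpha_1^{-1}+\alpha_2^{-1}-\alpha_3^{-1}-\alpha_4^{-1})\}\le v(\alpha_1^l+\alpha_2^l-\alpha_3^l-\alpha_4^l)$$ for all odd integers $l$. If additionally $\alpha_1+\alpha_2\in\mathcal{O}^\times$, then this holds for all integers $l$.
   Context: $F$ is a non-archimedean local field of characteristic $0$ and odd residue characteristic, $\mathcal{O}$ its ring of integers, $v$ its normalised valuation with $v(0)=\infty$. *)

(* Defs.v *)
(* with extended integers \bar int from mathcomp-analysis
   (constructive_ereal) as the value group Z ∪ {+oo}. *)
From mathcomp Require Import all_boot all_order all_algebra.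
From mathcomp Require Import constructive_ereal.
Set Implicit Arguments. Unset Strict Implicit. Unset Printing Implicit Defensive.
Import Order.TTheory GRing.Theory Num.Theory.
Local Open Scope ring_scope.

Definition normalised_valuation (F : fieldType) (v : F -> \bar int) : Prop :=
  [/\ v 0 = +oo%E,
      (forall x : F, x != 0 -> exists n : int, v x = n%:E),
      (forall x y : F, v (x * y)%R = (v x + v y)%E),
      (forall x y : F, (Order.min (v x) (v y) <= v (x + y)%R)%E)
    & exists pi : F, v pi = 1%:E].

Definition v_cauchy (F : fieldType) (v : F -> \bar int) (u : nat -> F) : Prop :=
  forall N : int, exists M : nat, forall m n : nat,
    (M <= m)%N -> (M <= n)%N -> (N%:E <= v (u m - u n)%R)%E.

Definition v_converges (F : fieldType) (v : F -> \bar int) (u : nat -> F) : Prop :=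
  exists L : F, forall N : int, exists M : nat, forall n : nat,
    (M <= n)%N -> (N%:E <= v (u n - L)%R)%E.

Definition v_complete (F : fieldType) (v : F -> \bar int) : Prop :=
  forall u : nat -> F, v_cauchy v u -> v_converges v u.

(* ring of integers O = {x | v x >= 0}; maximal ideal {x | v x > 0};
   the residue field O/m is finite: a finite list of representatives. *)
Definition finite_residue_field (F : fieldType) (v : F -> \bar int) : Prop :=
  exists s : seq F, (forall r, r \in s -> (0 <= v r)%E) /\
    forall x : F, (0 <= v x)%E -> exists2 r, r \in s & (0 < v (x - r)%R)%E.

Definition char0_local_field_odd_residue (F : fieldType) (v : F -> \bar int)
  : Prop :=
  [/\ [pchar F] =i pred0,
      normalised_valuation v,
      v_complete v,
      finite_residue_field v
    & v 2%:R = 0%:E  (* 2 is a unit in O, i.e. the residue characteristic is odd *)].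

Definition is_Ounit (F : fieldType) (v : F -> \bar int) (x : F) : Prop :=
  v x = 0%:E.

(* Main.v *)
Require Import Defs.
From mathcomp Require Import all_boot all_order all_algebra.
From mathcomp Require Import constructive_ereal.
From mathcomp Require Import ring.
Import Order.TTheory GRing.Theory Num.Theory.
Local Open Scope ring_scope.

Lemma key_gen (F : fieldType) (O I : F -> Prop)
 (O1 : O 1) (OD : forall x y, O x -> O y -> O (x + y)) (ON : forall x, O x -> O (- x))
 (OM : forall x y, O x -> O y -> O (x * y))
 (I0 : I 0) (ID : forall x y, I x -> I y -> I (x + y)) (IN : forall x, I x -> I (- x))
 (IM : forall c x, O c -> I x -> I (c * x))
 (a1 a2 a3 a4 : F) (O1' : O a1) (O2 : O a2) (O3 : O a3) (O4 : O a4)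
 (Hst : I (a1 + a2 - (a3 + a4)))
 (Hsq : I ((a1 + a2) * (a3 * a4) - (a3 + a4) * (a1 * a2))) :
 (forall n, odd n -> I (a1 ^+ n + a2 ^+ n - a3 ^+ n - a4 ^+ n)) /\
 (a1 + a2 != 0 -> O (a1 + a2)^-1 -> forall n, I (a1 ^+ n + a2 ^+ n - a3 ^+ n - a4 ^+ n)).
Proof.
set s := a1 + a2; set t := a3 + a4; set p := a1 * a2; set q := a3 * a4.
pose P n := a1 ^+ n + a2 ^+ n. pose Q n := a3 ^+ n + a4 ^+ n.
pose D n := P n - Q n.
have DE n : a1 ^+ n + a2 ^+ n - a3 ^+ n - a4 ^+ n = D n by rewrite /D /P /Q; ring.
have Os : O s by exact: (OD).
have Ot : O t by exact: (OD).
have Op : O p by exact: (OM).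
have Oq : O q by exact: (OM).
have Opow : forall a, O a -> forall n, O (a ^+ n).
  move=> a Oa; elim=> [|n IH]; first by rewrite expr0.
  by rewrite exprS; apply: (OM).
have OP n : O (P n) by apply: (OD); apply: (Opow).
have OQ n : O (Q n) by apply: (OD); apply: (Opow).
have Isub x y : I x -> I y -> I (x - y) by move=> ? ?; apply: (ID) => //; apply: (IN).
have Hspq : I (s * (p - q)).
  have -> : s * (p - q) = p * (s - t) - (s * q - t * p) by rewrite /s /t /p /q; ring.
  by apply: (Isub) => //; apply: (IM).
have Htpq : I (t * (p - q)).
  have -> : t * (p - q) = s * (p - q) - (p - q) * (s - t) by rewrite /s /t /p /q; ring.
  apply: (Isub) => //; apply: (IM) => //; apply: (OD) => //; exact: (ON).
have recD n : D n.+2 = s * D n.+1 + Q n.+1 * (s - t) - p * D n - Q n * (p - q).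
  by rewrite /D /P /Q /s /t /p /q !exprS; ring.
have recQ n : Q n.+2 = t * Q n.+1 - q * Q n.
  by rewrite /Q /t /q !exprS; ring.
split.
  pose K n := I (s * D n) /\ (odd n -> I (D n) /\ exists R, O R /\ Q n = t * R).
  have KK : forall n, K n /\ K n.+1.
    elim=> [|n [[Ks0 Ko0] [Ks1 Ko1]]].
      split; split => //.
      - by have -> : s * D 0 = 0 by rewrite /D /P /Q !expr0; ring.
      - have -> : s * D 1 = s * (s - t) by rewrite /D /P /Q /s /t !expr1; ring.
        by apply: (IM).
      - move=> _; split; first by have -> : D 1 = s - t by rewrite /D /P /Q /s /t !expr1; ring.
        by exists 1; split => //; rewrite /Q /t !expr1; ring.
    split; split => //.
    have -> : s * D n.+2 = s * (s * D n.+1) + Q n.+1 * (s * (s - t)) - p * (s * D n)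
        - Q n * (s * (p - q)) by rewrite recD; ring.
    apply: (Isub); [apply: (Isub); [apply: (ID)|]|].
    - exact: (IM).
    - by apply: (IM) => //; apply: (IM).
    - exact: (IM).
    - exact: (IM).
    move=> /= /negbNE on; have [IDn [R [OR QR]]] := Ko0 on.
    split.
      rewrite recD; apply: (Isub); [apply: (Isub); [apply: (ID)|]|].
      - by [].
      - exact: (IM).
      - exact: (IM).
      - rewrite QR (_ : t * R * (p - q) = R * (t * (p - q))); last by ring.
        exact: (IM).
    exists (Q n.+1 - q * R); split; first by apply: (OD) => //; apply: (ON); apply: (OM).
    by rewrite recQ QR; ring.
  by move=> n on; rewrite DE; have [[_ h] _] := KK n; case: (h on).
move=> s0 Osi.
have Ipq : I (p - q).
  have -> : p - q = s^-1 * (s * (p - q)) by rewrite mulrA mulVf // mul1r.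
  by apply: (IM).
have KK : forall n, I (D n) /\ I (D n.+1).
  elim=> [|n [K0 K1]].
    split; first by have -> : D 0 = 0 by rewrite /D /P /Q !expr0; ring.
    by have -> : D 1 = s - t by rewrite /D /P /Q /s /t !expr1; ring.
  split => //; rewrite recD; apply: (Isub); [apply: (Isub); [apply: (ID)|]|]; apply: (IM) => //.
by move=> n; rewrite DE; case: (KK n).
Qed.

Lemma main_aux (F : fieldType) (v : F -> \bar int)
  (HF : char0_local_field_odd_residue v)
  (a1 a2 a3 a4 : F)
  (h1 : is_Ounit v a1) (h2 : is_Ounit v a2)
  (h3 : is_Ounit v a3) (h4 : is_Ounit v a4) :
  (forall l : int, odd `|l|%N ->
     (Order.min (v (a1 + a2 - a3 - a4)%R)
                (v (a1^-1 + a2^-1 - a3^-1 - a4^-1)%R)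
      <= v (a1 ^ l + a2 ^ l - a3 ^ l - a4 ^ l)%R)%E)
  /\
  (is_Ounit v (a1 + a2) ->
   forall l : int,
     (Order.min (v (a1 + a2 - a3 - a4)%R)
                (v (a1^-1 + a2^-1 - a3^-1 - a4^-1)%R)
      <= v (a1 ^ l + a2 ^ l - a3 ^ l - a4 ^ l)%R)%E).
Proof.
move: HF => [_ [v0 vfin vmul vult _] _ _ _].
move: h1 h2 h3 h4; rewrite /is_Ounit => h1 h2 h3 h4.
have v1 : v 1 = 0%:E.
  have [n hn] := vfin 1 (oner_neq0 F).
  have := vmul 1 1; rewrite mulr1 hn => /eqP; rewrite eqe => /eqP h.
  by rewrite (_ : n = 0) //; apply: (@addrI _ n); rewrite -h addr0.
have vN1 : v (-1) = 0%:E.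
  have nN1 : (-1 : F) != 0 by rewrite oppr_eq0 oner_neq0.
  have [n hn] := vfin (-1) nN1.
  have := vmul (-1) (-1); rewrite mulrNN mulr1 hn v1 => /eqP; rewrite eqe => /eqP h.
  rewrite (_ : n = 0) //.
  apply/eqP; have : n *+ 2 == 0 by rewrite mulr2n -h.
  by rewrite mulrn_eq0.
have vN x : v (- x) = v x by rewrite -mulN1r vmul vN1 add0e.
have nz u : v u = 0%:E -> u != 0 by move=> hu; apply/eqP => u0; rewrite u0 v0 in hu.
have vinv u : v u = 0%:E -> v u^-1 = 0%:E.
  move=> hu; have := vmul u u^-1; rewrite mulfV ?nz // v1 hu add0e => ->; done.
set X := a1 + a2 - a3 - a4; set Y := a1^-1 + a2^-1 - a3^-1 - a4^-1.
set m := Order.min (v X) (v Y).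
pose O x := (0 <= v x)%E; pose I x := (m <= v x)%E.
have O1 : O 1 by rewrite /O v1.
have OD x y : O x -> O y -> O (x + y).
  move=> hx hy; apply: le_trans (vult x y); by rewrite le_min; apply/andP.
have ON x : O x -> O (- x) by rewrite /O vN.
have OM x y : O x -> O y -> O (x * y) by move=> hx hy; rewrite /O vmul adde_ge0.
have I0 : I 0 by rewrite /I v0 leey.
have ID x y : I x -> I y -> I (x + y).
  move=> hx hy; apply: le_trans (vult x y); by rewrite le_min; apply/andP.
have IN x : I x -> I (- x) by rewrite /I vN.
have IM c x : O c -> I x -> I (c * x) by move=> hc hx; rewrite /I vmul lee_paddl.
have IX : I X by rewrite /I ge_min lexx.
have IY : I Y by rewrite /I ge_min lexx orbT.
have Ou u : v u = 0%:E -> O u by rewrite /O => ->.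
have n1 := nz _ h1; have n2 := nz _ h2; have n3 := nz _ h3; have n4 := nz _ h4.
have K1 := @key_gen F O I O1 OD ON OM I0 ID IN IM _ _ _ _ (Ou _ h1) (Ou _ h2) (Ou _ h3) (Ou _ h4).
have K2 := @key_gen F O I O1 OD ON OM I0 ID IN IM _ _ _ _ (Ou _ (vinv _ h1)) (Ou _ (vinv _ h2))
   (Ou _ (vinv _ h3)) (Ou _ (vinv _ h4)).
have Hst1 : I (a1 + a2 - (a3 + a4)).
  by rewrite (_ : a1 + a2 - (a3 + a4) = X) // /X; ring.
have Hsq1 : I ((a1 + a2) * (a3 * a4) - (a3 + a4) * (a1 * a2)).
  rewrite (_ : _ - _ = (a1 * a2 * a3 * a4) * Y); last by rewrite /Y; field; rewrite ?n1 ?n2 ?n3 ?n4.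
  by apply: (IM) => //; repeat apply: (OM); apply: (Ou).
have Hst2 : I (a1^-1 + a2^-1 - (a3^-1 + a4^-1)).
  by rewrite (_ : _ - _ = Y) // /Y; ring.
have Hsq2 : I ((a1^-1 + a2^-1) * (a3^-1 * a4^-1) - (a3^-1 + a4^-1) * (a1^-1 * a2^-1)).
  rewrite (_ : _ - _ = (a1^-1 * a2^-1 * a3^-1 * a4^-1) * X); last by rewrite /X; field; rewrite ?n1 ?n2 ?n3 ?n4.
  by apply: (IM) => //; repeat apply: (OM); apply: (Ou); apply: (vinv).
have [Ko1 Ka1] := K1 Hst1 Hsq1.
have [Ko2 Ka2] := K2 Hst2 Hsq2.
have NE a n : a ^ (Negz n) = a^-1 ^+ n.+1 by rewrite exprVn.
split.
  case=> n /= on; first exact: (Ko1).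
  by rewrite !NE; apply: (Ko2).
move=> hs; case=> n; first exact: (Ka1) (nz _ hs) (Ou _ (vinv _ hs)) n.
rewrite !NE; have hs' : v (a1^-1 + a2^-1) = 0%:E.
  rewrite (_ : _ + _ = (a1 + a2) * (a1^-1 * a2^-1)); last by field; rewrite ?n1 ?n2.
  by rewrite !vmul hs !vinv.
exact: (Ka2) (nz _ hs') (Ou _ (vinv _ hs')) n.+1.
Qed.

Theorem lemma12p2 (F : fieldType) (v : F -> \bar int)
  (HF : char0_local_field_odd_residue v)
  (a1 a2 a3 a4 : F)
  (h1 : is_Ounit v a1) (h2 : is_Ounit v a2)
  (h3 : is_Ounit v a3) (h4 : is_Ounit v a4) :
  (forall l : int, odd `|l|%N ->
     (Order.min (v (a1 + a2 - a3 - a4)%R)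
                (v (a1^-1 + a2^-1 - a3^-1 - a4^-1)%R)
      <= v (a1 ^ l + a2 ^ l - a3 ^ l - a4 ^ l)%R)%E)
  /\
  (is_Ounit v (a1 + a2) ->
   forall l : int,
     (Order.min (v (a1 + a2 - a3 - a4)%R)
                (v (a1^-1 + a2^-1 - a3^-1 - a4^-1)%R)
      <= v (a1 ^ l + a2 ^ l - a3 ^ l - a4 ^ l)%R)%E).
Proof. exact: main_aux. Qed.
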